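(* Let $G$ be a simple graph with $m$ edges and girth $g(G)\ge 4$ (i.e. $G$ has no triangles). For $k=2,3,4$ define $\xi_{k-1}(G)=\sum_{uv\in E(G)}M_1^k(G-\{u,v\})$ (so $\xi_1$ sums $M_1$, $\xi_2$ sums $F$, $\xi_3$ sums $M_1^4$ of $G-\{u,v\}$ over all edges $uv$). Then \begin{enumerate} \item $\xi_1(G)=(m+3)M_1(G)-F(G)-4M_2(G)-2m$; \item $\xi_2(G)=(m+3)F(G)-M_1^4(G)-3\alpha(G)+6M_2(G)-4M_1(G)+2m$; \item $\xi_3(G)=(m+4)M_1^4(G)-M_1^5(G)+5M_1(G)-2m-4\alpha_2(G)+6\alpha(G)-6F(G)-8M_2(G)$. \end{enumerate}
   Context: All graphs are finite, simple and undirected. $d_G(v)$ is the degree of $v$ in $G$; $G-\{u,v\}$ is the graph obtained by deleting the vertices $u,v$ and all incident edges. The girth $g(G)$ is the length of a shortest cycle (infinite if acyclic). $M_1^\alpha(G)=\sum_{v\in V(G)}d_G(v)^\alpha$ (exponent on degrees); $M_1(G)=M_1^2(G)$, $F(G)=M_1^3(G)$; $M_2(G)=\sum_{uv\in E(G)}d_G(u)d_G(v)$; $\alpha_\lambda(G)=\sum_{uv\in E(G)}d_G(u)d_G(v)\big[d_G(u)^\lambda+d_G(v)^\lambda\big]$, $\alpha(G)=\alpha_1(G)$. *)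

(* Defs.v *)
From mathcomp Require Import all_boot all_order all_algebra.
Set Implicit Arguments. Unset Strict Implicit. Unset Printing Implicit Defensive.
Import Order.TTheory GRing.Theory Num.Theory.

Section Graph.
Variables (T : finType) (e : rel T).

Definition simple_graph : Prop := symmetric e /\ irreflexive e.

Definition triangle_free : Prop :=
  forall u v w : T, e u v -> e v w -> e w u -> False.

Definition edges : {set {set T}} := [set [set u; v] | u in T, v in T & e u v].

Definition deg_in (S : {set T}) (v : T) : nat := #|[set w in S | e v w]|.
Definition deg (v : T) : nat := deg_in setT v.

Definition M1k_in (S : {set T}) (k : nat) : nat :=
  \sum_(v in S) deg_in S v ^ k.
Definition M1k (k : nat) : nat := M1k_in setT k.

(* G - {u,v} for an edge f = {u,v} is the induced subgraph on ~: f. *)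
Definition xi (k : nat) : nat := \sum_(f in edges) M1k_in (~: f) k.

Definition M2 : nat := \sum_(f in edges) \prod_(v in f) deg v.

Definition alpha_lam (l : nat) : nat :=
  \sum_(f in edges) (\prod_(v in f) deg v) * (\sum_(v in f) deg v ^ l).
End Graph.

(* Main.v *)
Require Import Defs.
From mathcomp Require Import all_boot all_order all_algebra.
From mathcomp Require Import ring lra zify.
Import Order.TTheory GRing.Theory Num.Theory.
Set Implicit Arguments. Unset Strict Implicit. Unset Printing Implicit Defensive.

Section Aux.
Variables (T : finType) (e : rel T).
Hypothesis esym : symmetric e.
Hypothesis eirr : irreflexive e.
Hypothesis etri : triangle_free e.

Lemma card_sumn (S : {set T}) (p : pred T) :
  #|[set x in S | p x]| = (\sum_(x in S) p x)%N.
Proof.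
rewrite -sum1_card big_mkcond [RHS]big_mkcond /=.
by apply: eq_bigr => x _; rewrite !inE; case: (x \in S); case: (p x).
Qed.

Lemma big2n (u v : T) (G : T -> nat) : u != v ->
  (\sum_w G w = G u + G v + \sum_(w in ~: [set u; v]) G w)%N.
Proof.
move=> nuv.
rewrite (eq_bigl (fun w => w \in setT)); last by move=> x; rewrite inE.
rewrite (big_setID [set u; v]) /= setTI setTD.
by rewrite big_setU1 ?inE // big_set1.
Qed.

Local Open Scope ring_scope.

Lemma big2z (u v : T) (G : T -> int) : u != v ->
  \sum_w G w = G u + G v + \sum_(w in ~: [set u; v]) G w.
Proof.
move=> nuv.
rewrite (eq_bigl (fun w => w \in setT)); last by move=> x; rewrite inE.
rewrite (big_setID [set u; v]) /= setTI setTD.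
by rewrite big_setU1 ?inE // big_set1.
Qed.

Lemma Posz_sum (I : finType) (P : pred I) (F : I -> nat) :
  ((\sum_(i | P i) F i)%N)%:Z = \sum_(i | P i) (F i)%:Z.
Proof. exact: (big_morph Posz PoszD (erefl _)). Qed.

Lemma PoszX n k : ((n ^ k)%N)%:Z = n%:Z ^+ k.
Proof. by rewrite -!natz natrX. Qed.

Definition dz (w : T) : int := (deg e w)%:Z.
Definition Ez (u v : T) : int := (nat_of_bool (e u v))%:Z.
Definition DS (F : T -> T -> int) : int := \sum_u \sum_v Ez u v * F u v.

Lemma deg_sum w : deg e w = (\sum_x e w x)%N.
Proof.
rewrite /deg /deg_in card_sumn.
by apply: eq_bigl => x; rewrite inE.
Qed.

Lemma dz_sum u : \sum_v Ez u v = dz u.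
Proof. by rewrite /dz deg_sum Posz_sum. Qed.

Lemma DS_swap F : DS (fun u v => F v u) = DS F.
Proof.
rewrite /DS exchange_big; apply: eq_bigr => a _; apply: eq_bigr => b _.
by rewrite /Ez esym.
Qed.

Lemma DS_h h : DS (fun u v => h u) = \sum_u dz u * h u.
Proof. by rewrite /DS; apply: eq_bigr => u _; rewrite -mulr_suml dz_sum. Qed.

Lemma DSB F G : DS (fun u v => F u v - G u v) = DS F - DS G.
Proof.
rewrite /DS -sumrB; apply: eq_bigr => u _; rewrite -sumrB.
by apply: eq_bigr => v _; rewrite mulrBr.
Qed.

Lemma DSD F G : DS (fun u v => F u v + G u v) = DS F + DS G.
Proof.
rewrite /DS -big_split; apply: eq_bigr => u _; rewrite -big_split.
by apply: eq_bigr => v _; rewrite mulrDr.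
Qed.

Lemma DSZ c F : c * DS F = DS (fun u v => c * F u v).
Proof.
rewrite /DS mulr_sumr; apply: eq_bigr => u _; rewrite mulr_sumr.
by apply: eq_bigr => v _; rewrite mulrCA.
Qed.

Lemma eq_DS F G : (forall u v, e u v -> F u v = G u v) -> DS F = DS G.
Proof.
move=> H; apply: eq_bigr => u _; apply: eq_bigr => v _.
by rewrite /Ez; case Huv: (e u v); rewrite ?mul0r // H.
Qed.

Lemma neq_edge u v : e u v -> u != v.
Proof. by move=> H; apply/eqP => E; move: H; rewrite E eirr. Qed.

Lemma pair_set_eq a b x y : e a b ->
  (e x y && ([set x; y] == [set a; b])) = ((x, y) \in [set (a, b); (b, a)]).
Proof.
move=> Eab; rewrite !inE; apply/andP/orP.
- case=> exy /eqP H.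
  have xab : x \in [set a; b] by rewrite -H !inE eqxx.
  have yab : y \in [set a; b] by rewrite -H !inE eqxx orbT.
  move: xab yab exy; rewrite !inE => /orP[/eqP->|/eqP->] /orP[/eqP->|/eqP->];
    rewrite ?eirr // => _; [left | right]; by [].
- case=> /eqP [-> ->]; split => //; first by rewrite esym.
  by rewrite setUC.
Qed.

Lemma pairs_sum (F : {set T} -> int) :
  2 * \sum_(f in edges e) F f = DS (fun u v => F [set u; v]).
Proof.
have -> : DS (fun u v => F [set u; v]) = \sum_u \sum_(v | e u v) F [set u; v].
  rewrite /DS; apply: eq_bigr => u _; rewrite [RHS]big_mkcond /=; apply: eq_bigr => v _.
  by rewrite /Ez; case: (e u v); rewrite ?mul1r ?mul0r.
rewrite pair_big_dep /=.
rewrite (partition_big (fun q : T * T => [set q.1; q.2]) (mem (edges e))) /=; last first.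
  by case=> x y /= exy; apply/imset2P; exists x y; rewrite ?inE.
rewrite mulr_sumr; apply: eq_bigr => f /imset2P [a b _]; rewrite inE => Eab ->.
rewrite (eq_bigl (fun q => q \in [set (a, b); (b, a)])); last first.
  by case=> x y /=; rewrite pair_set_eq.
rewrite big_setU1 ?big_set1 /=; last first.
  rewrite inE; apply/eqP => -[E _]; move: Eab; by rewrite E eirr.
by rewrite [[set b; a]]setUC; ring.
Qed.


Definition Qk k (x : int) : int := x ^+ k - (x - 1) ^+ k.
Definition Sk k u : int := \sum_w Ez u w * Qk k (dz w).

Lemma deg_split u v w : e u v ->
  deg e w = (deg_in e (~: [set u; v]) w + e w u + e w v)%N.
Proof.
move=> Euv; rewrite deg_sum (big2n _ (neq_edge Euv)) /deg_in card_sumn; lia.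
Qed.

Lemma edge_M1k u v k : e u v ->
  (M1k_in e (~: [set u; v]) k)%:Z = (M1k e k)%:Z - dz u ^+ k - dz v ^+ k
     - Sk k u - Sk k v + Qk k (dz u) + Qk k (dz v).
Proof.
move=> Euv; have nuv := neq_edge Euv.
pose G := fun w => dz w ^+ k - (Ez u w + Ez v w) * Qk k (dz w).
have HM : (M1k e k)%:Z = \sum_w G w + Sk k u + Sk k v.
  rewrite /M1k /M1k_in Posz_sum /Sk -!big_split /=.
  rewrite [LHS](eq_bigl (fun _ => true)); last by move=> x; rewrite inE.
  by apply: eq_bigr => w _; rewrite PoszX /G /dz /deg; ring.
have Hsub : (M1k_in e (~: [set u; v]) k)%:Z = \sum_(w in ~: [set u; v]) G w.
  rewrite /M1k_in Posz_sum; apply: eq_bigr => w _.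
  rewrite PoszX /G /dz (deg_split w Euv) /Ez [e u w]esym [e v w]esym.
  case Hu: (e w u); case Hv: (e w v) => /=.
  - by exfalso; apply: (etri Euv _ Hu); rewrite esym.
  - by rewrite addn0 /Qk PoszD addrK; ring.
  - by rewrite addn0 /Qk PoszD addrK; ring.
  - by rewrite !addn0; ring.
have Gu : G u = dz u ^+ k - Qk k (dz u).
  by rewrite /G /Ez eirr [e v u]esym Euv /=; ring.
have Gv : G v = dz v ^+ k - Qk k (dz v).
  by rewrite /G /Ez eirr Euv /=; ring.
rewrite Hsub HM (big2z G nuv) Gu Gv; ring.
Qed.


Definition A (i j : nat) := DS (fun u v => dz u ^+ i * dz v ^+ j).
Arguments A (i j)%_nat_scope.

Lemma A_swap i j : A i j = A j i.
Proof. by rewrite /A -DS_swap; apply: eq_DS => u v _; rewrite mulrC. Qed.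

Lemma Hm : 2 * (#|edges e|)%:Z = A 0 0.
Proof.
rewrite -natz; have := pairs_sum (fun _ => 1); rewrite sumr_const => ->.
by apply: eq_DS => u v _; rewrite !expr0 mulr1.
Qed.

Lemma HP j : (M1k e j.+1)%:Z = A j 0.
Proof.
rewrite /A (eq_DS (G := fun u v => dz u ^+ j)); last by move=> u v _; rewrite expr0 mulr1.
rewrite DS_h /M1k /M1k_in Posz_sum.
rewrite [LHS](eq_bigl (fun _ => true)); last by move=> x; rewrite inE.
by apply: eq_bigr => w _; rewrite PoszX exprS.
Qed.

Lemma HM2 : 2 * (M2 e)%:Z = A 1 1.
Proof.
rewrite /M2 Posz_sum pairs_sum; apply: eq_DS => u v Euv.
rewrite big_setU1 ?inE ?neq_edge // big_set1 PoszM /dz; ring.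
Qed.

Lemma Hal l : 2 * (alpha_lam e l)%:Z = A l.+1 1 + A 1 l.+1.
Proof.
rewrite /alpha_lam Posz_sum pairs_sum /A -DSD; apply: eq_DS => u v Euv.
rewrite big_setU1 ?inE ?neq_edge // big_set1 big_setU1 ?inE ?neq_edge // big_set1.
rewrite PoszM PoszM PoszD !PoszX /dz !exprS !expr0 !mulr1; ring.
Qed.

Lemma Hxi k : 2 * (xi e k)%:Z =
  DS (fun u v => (M1k e k)%:Z - dz u ^+ k - dz v ^+ k + Qk k (dz u) + Qk k (dz v))
  - 2 * DS (fun u v => dz u * Qk k (dz v)).
Proof.
rewrite /xi Posz_sum pairs_sum.
rewrite (eq_DS (G := fun u v =>
   ((M1k e k)%:Z - dz u ^+ k - dz v ^+ k + Qk k (dz u) + Qk k (dz v))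
   - Sk k u - Sk k v)); last by move=> u v Euv; rewrite edge_M1k //; ring.
rewrite !DSB (DS_swap (fun u v => Sk k u)).
have -> : DS (fun u v => Sk k u) = DS (fun u v => dz u * Qk k (dz v)).
  rewrite DS_h /DS; apply: eq_bigr => u _; rewrite /Sk mulr_sumr.
  by apply: eq_bigr => w _; rewrite mulrCA.
ring.
Qed.

Ltac lin := rewrite /A ?DSZ; repeat first [rewrite -DSB | rewrite -DSD];
  apply: eq_DS => u v _; rewrite /Qk; ring.

Lemma Y2 M : DS (fun u v => M - dz u ^+ 2 - dz v ^+ 2 + Qk 2 (dz u) + Qk 2 (dz v))
  = M * A 0 0 - A 2 0 - A 0 2 + 2 * A 1 0 - A 0 0 + 2 * A 0 1 - A 0 0.
Proof. lin. Qed.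
Lemma W2 : DS (fun u v => dz u * Qk 2 (dz v)) = 2 * A 1 1 - A 1 0.
Proof. lin. Qed.
Lemma Y3 M : DS (fun u v => M - dz u ^+ 3 - dz v ^+ 3 + Qk 3 (dz u) + Qk 3 (dz v))
  = M * A 0 0 - A 3 0 - A 0 3 + 3 * A 2 0 - 3 * A 1 0 + A 0 0
    + 3 * A 0 2 - 3 * A 0 1 + A 0 0.
Proof. lin. Qed.
Lemma W3 : DS (fun u v => dz u * Qk 3 (dz v)) = 3 * A 1 2 - 3 * A 1 1 + A 1 0.
Proof. lin. Qed.
Lemma Y4 M : DS (fun u v => M - dz u ^+ 4 - dz v ^+ 4 + Qk 4 (dz u) + Qk 4 (dz v))
  = M * A 0 0 - A 4 0 - A 0 4 + 4 * A 3 0 - 6 * A 2 0 + 4 * A 1 0 - A 0 0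
    + 4 * A 0 3 - 6 * A 0 2 + 4 * A 0 1 - A 0 0.
Proof. lin. Qed.
Lemma W4 : DS (fun u v => dz u * Qk 4 (dz v)) =
  4 * A 1 3 - 6 * A 1 2 + 4 * A 1 1 - A 1 0.
Proof. lin. Qed.

End Aux.

Unset Implicit Arguments.
Local Open Scope ring_scope.
Theorem lemma2p2 (T : finType) (e : rel T) :
  simple_graph e -> triangle_free e ->
  let m : int := (#|edges e|)%:Z in
  [/\ (xi e 2)%:Z = (m + 3) * (M1k e 2)%:Z - (M1k e 3)%:Z - 4 * (M2 e)%:Z - 2 * m,
      (xi e 3)%:Z = (m + 3) * (M1k e 3)%:Z - (M1k e 4)%:Z - 3 * (alpha_lam e 1)%:Z
                    + 6 * (M2 e)%:Z - 4 * (M1k e 2)%:Z + 2 * m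
    & (xi e 4)%:Z = (m + 4) * (M1k e 4)%:Z - (M1k e 5)%:Z + 5 * (M1k e 2)%:Z - 2 * m
                    - 4 * (alpha_lam e 2)%:Z + 6 * (alpha_lam e 1)%:Z
                    - 6 * (M1k e 3)%:Z - 8 * (M2 e)%:Z].
Proof.
move=> [esym eirr] etri m.
have H2m : 2 * m = A e 0 0 by apply: Hm.
have HM : 2 * (M2 e)%:Z = A e 1 1 by apply: HM2.
have Ha1 : 2 * (alpha_lam e 1)%:Z = A e 2 1 + A e 1 2 by apply: Hal.
have Ha2 : 2 * (alpha_lam e 2)%:Z = A e 3 1 + A e 1 3 by apply: Hal.
have X2 := Hxi esym eirr etri 2; rewrite Y2 W2 in X2.
have X3 := Hxi esym eirr etri 3; rewrite Y3 W3 in X3.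
have X4 := Hxi esym eirr etri 4; rewrite Y4 W4 in X4.
rewrite !HP in X2 X3 X4 *.
rewrite -H2m in X2 X3 X4.
rewrite !(A_swap esym 0) !(A_swap esym 1 2) !(A_swap esym 1 3) in X2 X3 X4 Ha1 Ha2.
split; lia.
Qed.
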